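(* Let $x_1,x_2>0$ and $\pi\in(0,1)$ be as described in the context, and let $\pi_0=\frac{1-x_1x_2}{x_1+x_2-2x_1x_2}$. Diffusion occurs from a small seed if and only if one of the following holds: (1) $x_1x_2>1$; or (2) $x_1x_2\le1$, $(x_1,x_2)\neq(1,1)$, and $\pi>\pi_0$.
   Context: There are two types $i\in\{1,2\}$, with meeting matrix $\Pi=\begin{pmatrix}\pi&1-\pi\\1-\pi&\pi\end{pmatrix}$, $0<\pi<1$ ($\pi_{ij}$ is the probability a meeting of a type-$i$ agent is with a type-$j$ agent). For each type $i$: $P_i$ is a degree distribution on the nonnegative integers; $w_i(d)>0$ are degree weights for $d$ with $P_i(d)>0$; $f_i(d,a)$ and $g_i(d,a)$ ($0\le a\le d$) are the adoption and abandonment rates of a type-$i$, degree-$d$ agent who meets $a$ adopters, satisfying: $f_i(d,0)=0$; $f_i(d,a)$ nondecreasing in $a$; $f_i(d,1)>0$ for some $d$ with $P_i(d)>0$; $g_i(d,0)>0$; $g_i(d,a)$ nonincreasing in $a$. Let $x_i=\sum_dP_i(d)w_i(d)\,d\,\frac{f_i(d,1)}{g_i(d,0)}$, assumed finite (it is positive), and $$A=\begin{pmatrix}\pi x_1&(1-\pi)x_2\\(1-\pi)x_1&\pi x_2\end{pmatrix}.$$ Diffusion occurs from a small seed means: for every $\varepsilon>0$ there exists $v\in\mathbb{R}^2$ with $0<v_i<\varepsilon$ and $(Av)_i>v_i$ for $i=1,2$. *)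

(* Defs.v *)
From Stdlib Require Import Reals.
Open Scope R_scope.

Definition Av1 (pi x1 x2 v1 v2 : R) : R := pi * x1 * v1 + (1 - pi) * x2 * v2.
Definition Av2 (pi x1 x2 v1 v2 : R) : R := (1 - pi) * x1 * v1 + pi * x2 * v2.

Definition diffusion_small_seed (pi x1 x2 : R) : Prop :=
  forall eps : R, 0 < eps ->
    exists v1 v2 : R,
      0 < v1 < eps /\ 0 < v2 < eps /\
      Av1 pi x1 x2 v1 v2 > v1 /\ Av2 pi x1 x2 v1 v2 > v2.

Definition pi0 (x1 x2 : R) : R := (1 - x1 * x2) / (x1 + x2 - 2 * x1 * x2).

(* Main.v *)
Require Import Defs.
From Stdlib Require Import Reals Lra Psatz.
Open Scope R_scope.

Lemma Dpos x1 x2 : 0 < x1 -> 0 < x2 -> x1 * x2 <= 1 -> ~ (x1 = 1 /\ x2 = 1) ->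
  0 < x1 + x2 - 2 * x1 * x2.
Proof.
  intros h1 h2 hp hn. destruct (Rlt_or_le 0 (x1 + x2 - 2 * x1 * x2)) as [h|h]; auto.
  exfalso.
  assert (hs : (x1 - x2)^2 <= 0).
  { assert (e : (x1-x2)^2 = (x1+x2)^2 - 4*(x1*x2)) by ring.
    assert (0 <= x1 + x2) by lra.
    assert ((x1+x2)^2 <= (2*x1*x2)^2) by nra.
    assert (0 < x1*x2) by nra. nra. }
  assert (x1 = x2) by nra. subst x2.
  assert (x1 >= 1) by nra. assert (x1 <= 1) by nra. apply hn; lra.
Qed.

Lemma det_eq pi x1 x2 : (1 - pi*x1)*(1 - pi*x2) - (1-pi)^2*x1*x2 =
  1 - x1*x2 - pi*(x1 + x2 - 2*x1*x2).
Proof. ring. Qed.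

Lemma arith (pi x1 x2 : R) (hx1 : 0 < x1) (hx2 : 0 < x2) (hpi : 0 < pi < 1) :
  (pi*x1 >= 1 \/ pi*x2 >= 1 \/ (1 - pi*x1)*(1 - pi*x2) < (1-pi)^2*x1*x2) <->
  (x1 * x2 > 1 \/
   (x1 * x2 <= 1 /\ (x1, x2) <> (1, 1) /\ pi > pi0 x1 x2)).
Proof.
  assert (hdet : (1 - pi*x1)*(1 - pi*x2) < (1-pi)^2*x1*x2 ->
     x1 * x2 <= 1 -> (x1, x2) <> (1, 1) /\ pi > pi0 x1 x2).
  { intros hd hp.
    assert (hd' : 1 - x1*x2 - pi*(x1 + x2 - 2*x1*x2) < 0).
    { rewrite <- det_eq. lra. }
    assert (hn : ~ (x1 = 1 /\ x2 = 1)).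
    { intros [-> ->]. lra. }
    split. { intro e; inversion e; tauto. }
    pose proof (Dpos x1 x2 hx1 hx2 hp hn) as hD.
    unfold pi0. apply Rlt_gt.
    apply (Rmult_lt_reg_r (x1 + x2 - 2 * x1 * x2)); auto.
    unfold Rdiv. rewrite Rmult_assoc, Rinv_l by lra. lra. }
  split.
  - intros H. destruct (Rlt_or_le 1 (x1*x2)) as [hp|hp]; [left; lra|right].
    split; auto. apply hdet; auto.
    destruct H as [H|[H|H]]; auto.
    + assert (pi*x2 < 1).
      { assert (0 < pi*x2) by nra. assert (pi*x2*1 <= pi*x2*(pi*x1)) by (apply Rmult_le_compat_l; lra).
        assert (pi*x2*(pi*x1) = (pi*pi)*(x1*x2)) by ring.
        assert (pi*pi < 1) by nra. assert (0 < pi*pi) by nra. nra. }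
      assert (0 < (1-pi)^2*x1*x2).
      { assert (0 < (1-pi)^2) by (apply pow_lt; lra). apply Rmult_lt_0_compat; [apply Rmult_lt_0_compat|]; lra. }
      nra.
    + assert (pi*x1 < 1).
      { assert (0 < pi*x1) by nra. assert (pi*x1*1 <= pi*x1*(pi*x2)) by (apply Rmult_le_compat_l; lra).
        assert (pi*x1*(pi*x2) = (pi*pi)*(x1*x2)) by ring.
        assert (pi*pi < 1) by nra. assert (0 < pi*pi) by nra. nra. }
      assert (0 < (1-pi)^2*x1*x2).
      { assert (0 < (1-pi)^2) by (apply pow_lt; lra). apply Rmult_lt_0_compat; [apply Rmult_lt_0_compat|]; lra. }
      nra.
  - intros [H|[hp [hn hg]]].
    + destruct (Rle_or_lt 1 (pi*x1)) as [h1|h1]; [left; lra|].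
      destruct (Rle_or_lt 1 (pi*x2)) as [h2|h2]; [right; left; lra|].
      right; right. cut (0 < (1-pi)^2*x1*x2 - (1 - pi*x1)*(1 - pi*x2)); [lra|].
      assert (1 - x1*x2 - pi*(x1 + x2 - 2*x1*x2) < 0).
      { destruct (Rle_or_lt ((1-x1)*(1-x2)) 0) as [hq|hq].
        - assert (e : 1 - x1*x2 - pi*(x1 + x2 - 2*x1*x2) =
             (1-pi)*(1-x1*x2) + pi*((1-x1)*(1-x2))) by ring.
          rewrite e. nra.
        - assert (x1 > 1 /\ x2 > 1) as [g1 g2].
          { destruct (Rlt_or_le 1 x1); destruct (Rlt_or_le 1 x2); try nra. }
          rewrite <- det_eq.
          assert (0 < 1 - pi*x1 < (1-pi)*x1) by nra.
          assert (0 < 1 - pi*x2 < (1-pi)*x2) by nra.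
          assert ((1-pi*x1)*(1-pi*x2) < ((1-pi)*x1)*((1-pi)*x2)) by nra.
          nra. }
      pose proof (det_eq pi x1 x2). lra.
    + right; right. cut (0 < (1-pi)^2*x1*x2 - (1 - pi*x1)*(1 - pi*x2)); [lra|].
      pose proof (det_eq pi x1 x2).
      assert (hn' : ~ (x1 = 1 /\ x2 = 1)).
      { intros [-> ->]. apply hn; reflexivity. }
      pose proof (Dpos x1 x2 hx1 hx2 hp hn') as hD.
      unfold pi0 in hg.
      assert (pi * (x1 + x2 - 2 * x1 * x2) > 1 - x1*x2).
      { apply Rgt_lt in hg. apply (Rmult_lt_compat_r (x1 + x2 - 2 * x1 * x2)) in hg; auto.
        unfold Rdiv in hg. rewrite Rmult_assoc, Rinv_l in hg by lra. lra. }
      lra.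
Qed.

Lemma core (pi x1 x2 : R) (hx1 : 0 < x1) (hx2 : 0 < x2) (hpi : 0 < pi < 1) :
  diffusion_small_seed pi x1 x2 <->
  (pi*x1 >= 1 \/ pi*x2 >= 1 \/ (1 - pi*x1)*(1 - pi*x2) < (1-pi)^2*x1*x2).
Proof.
  set (a := 1 - pi*x1). set (d := 1 - pi*x2).
  set (b := (1-pi)*x2). set (c := (1-pi)*x1).
  assert (hb : 0 < b) by (unfold b; nra).
  assert (hc : 0 < c) by (unfold c; nra).
  assert (ebc : (1-pi)^2*x1*x2 = b*c) by (unfold b, c; ring).
  rewrite ebc.
  assert (E1 : forall v1 v2, Av1 pi x1 x2 v1 v2 > v1 <-> b*v2 > a*v1).
  { intros; unfold Av1, a, b; split; intro; lra. }
  assert (E2 : forall v1 v2, Av2 pi x1 x2 v1 v2 > v2 <-> c*v1 > d*v2).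
  { intros; unfold Av2, c, d; split; intro; lra. }
  unfold diffusion_small_seed. split.
  - intros H. destruct (H 1 Rlt_0_1) as [v1 [v2 [h1 [h2 [h3 h4]]]]].
    apply E1 in h3. apply E2 in h4.
    destruct (Rle_or_lt a 0) as [ha|ha]; [left; unfold a in ha; lra|].
    destruct (Rle_or_lt d 0) as [hd|hd]; [right; left; unfold d in hd; lra|].
    right; right.
    assert (0 < a*v1) by nra. assert (0 < d*v2) by nra.
    assert ((a*v1)*(d*v2) < (b*v2)*(c*v1)) by nra.
    assert (0 < v1*v2) by nra. nra.
  - intros H eps he.
    destruct (Rle_or_lt a 0) as [ha|ha]; destruct (Rle_or_lt d 0) as [hd|hd].
    + exists (eps/2), (eps/2). rewrite E1, E2. repeat split; nra.
    + exists (eps/2), (c*eps/(2*(c+d))).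
      assert (hq : 0 < c/(c+d) < 1).
      { split. apply Rdiv_lt_0_compat; lra.
        apply (Rmult_lt_reg_r (c+d)); [lra|]. unfold Rdiv.
        rewrite Rmult_assoc, Rinv_l by lra. lra. }
      replace (c*eps/(2*(c+d))) with ((c/(c+d))*(eps/2)) by (field; lra).
      set (q := c/(c+d)) in *.
      assert (dq : d*q < c).
      { apply (Rmult_lt_reg_r (c+d)); [lra|].
        assert (e : d*q*(c+d) = d*c) by (unfold q; field; lra). rewrite e. nra. }
      assert (0 < eps/2) by lra.
      assert (0 < b*q) by nra. assert (a*(eps/2) <= 0) by nra.
      assert (d*q*(eps/2) < c*(eps/2)) by nra.
      rewrite E1, E2. repeat split; nra.
    + exists (b*eps/(2*(a+b))), (eps/2).
      assert (hq : 0 < b/(a+b) < 1).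
      { split. apply Rdiv_lt_0_compat; lra.
        apply (Rmult_lt_reg_r (a+b)); [lra|]. unfold Rdiv.
        rewrite Rmult_assoc, Rinv_l by lra. lra. }
      replace (b*eps/(2*(a+b))) with ((b/(a+b))*(eps/2)) by (field; lra).
      set (q := b/(a+b)) in *.
      assert (aq : a*q < b).
      { apply (Rmult_lt_reg_r (a+b)); [lra|].
        assert (e : a*q*(a+b) = a*b) by (unfold q; field; lra). rewrite e. nra. }
      assert (0 < eps/2) by lra.
      assert (a*q*(eps/2) < b*(eps/2)) by nra.
      assert (0 < c*q) by nra. assert (d*(eps/2) <= 0) by nra.
      rewrite E1, E2. repeat split; nra.
    + assert (hbc : a*d < b*c).
      { destruct H as [H|[H|H]]; [unfold a in ha; lra|unfold d in hd; lra|exact H]. }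
      set (K := 2*b*d + a*d + b*c + 1).
      assert (hK : 0 < K) by (unfold K; nra).
      set (s := eps / K).
      assert (hs : 0 < s) by (unfold s; apply Rdiv_lt_0_compat; lra).
      assert (hsK : s * K = eps) by (unfold s; field; lra).
      assert (hbd : 0 < b*d) by nra. assert (had : 0 < a*d) by nra.
      assert (hbc' : 0 < b*c) by nra.
      assert (0 < b*s*(b*c-a*d)) by (apply Rmult_lt_0_compat; [apply Rmult_lt_0_compat|]; lra).
      assert (0 < d*s*(b*c-a*d)) by (apply Rmult_lt_0_compat; [apply Rmult_lt_0_compat|]; lra).
      assert (2*b*d*s < K*s) by (apply Rmult_lt_compat_r; [lra|unfold K; lra]).
      assert ((a*d+b*c)*s < K*s) by (apply Rmult_lt_compat_r; [lra|unfold K; lra]).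
      assert (0 < 2*b*d*s) by (apply Rmult_lt_0_compat; lra).
      assert (0 < (a*d+b*c)*s) by (apply Rmult_lt_0_compat; lra).
      exists (2*b*d*s), ((a*d+b*c)*s). rewrite E1, E2.
      assert (e1 : b*((a*d+b*c)*s) - a*(2*b*d*s) = b*s*(b*c-a*d)) by ring.
      assert (e2 : c*(2*b*d*s) - d*((a*d+b*c)*s) = d*s*(b*c-a*d)) by ring.
      repeat split; lra.
Qed.

Theorem theorem2 (pi x1 x2 : R) (hx1 : 0 < x1) (hx2 : 0 < x2)
  (hpi : 0 < pi < 1) :
  diffusion_small_seed pi x1 x2 <->
  (x1 * x2 > 1 \/
   (x1 * x2 <= 1 /\ (x1, x2) <> (1, 1) /\ pi > pi0 x1 x2)).
Proof.
  rewrite core by auto. apply arith; auto.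
Qed.
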